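(* Let $\phi:\mathbb{R}^n\to[-\infty,\infty]$ be a proper nearly convex function, $\Theta\subset\mathbb{R}^n$ a nearly convex set, and $G:\mathbb{R}^n\rightrightarrows\mathbb{R}^q$ a nearly convex set-valued mapping. Suppose $$\operatorname{ri}(\operatorname{dom}\phi)\cap\operatorname{ri}(\operatorname{dom} G)\cap\operatorname{ri}\Theta\neq\emptyset\quad\text{and}\quad 0\in\operatorname{ri}\big(G(\Theta\cap\operatorname{dom}\phi)\big).$$ Let $v_G(x,y^* )=\inf\{\langle -y^*,y\rangle: y\in G(x)\}$ and $h(y^* )=\inf\{\phi(x)+v_G(x,y^* ):x\in\Theta\}$, which is understood as $h(y^* )=\inf\{\phi(x)-\langle y^*,y\rangle: x\in\Theta,\ y\in G(x)\}$. Then $\mathcal{V}=\mathcal{V}_d$, where $\mathcal{V}=\inf\{\phi(x):x\in\Theta,\ 0\in G(x)\}$ and $\mathcal{V}_d=\sup_{y^*\in\mathbb{R}^q}h(y^* )$.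
   Context: A set $\Omega$ is nearly convex if there is a convex set $C$ with $C\subset\Omega\subset\overline{C}$; $\operatorname{ri}\Omega=\{a\in\Omega:\exists\delta>0,\ B(a;\delta)\cap\operatorname{aff}\Omega\subset\Omega\}$. A function is nearly convex if its epigraph is nearly convex, proper if its domain $\{\phi<\infty\}$ is nonempty and $\phi>-\infty$. For $G:\mathbb{R}^n\rightrightarrows\mathbb{R}^q$: $\operatorname{dom}G=\{x:G(x)\neq\emptyset\}$, $G$ nearly convex if $\operatorname{gph}G=\{(x,y):y\in G(x)\}$ is; $G(S)=\bigcup_{x\in S}G(x)$. Convention $\inf\emptyset=\infty$. *)

(* Defs.v *)
(* R^n is 'rV[R]_n, R^n x R^q is encoded as 'rV[R]_(n+q)
   via row_mx (block concatenation). *)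
From HB Require Import structures.
From mathcomp Require Import all_boot all_order all_algebra.
From mathcomp Require Import boolp classical_sets reals constructive_ereal ereal.
Set Implicit Arguments. Unset Strict Implicit. Unset Printing Implicit Defensive.
Import Order.TTheory GRing.Theory Num.Theory.
Local Open Scope classical_set_scope.
Local Open Scope ring_scope.

Section Defs.
Variable R : realType.

Definition dotv (k : nat) (u v : 'rV[R]_k) : R := \sum_(i < k) u 0 i * v 0 i.
Definition sqdist (k : nat) (u v : 'rV[R]_k) : R := dotv (u - v) (u - v).

Definition eball (k : nat) (a : 'rV[R]_k) (d : R) : set 'rV[R]_k :=
  [set x | sqdist x a < d ^+ 2].

Definition convex_set (k : nat) (C : set 'rV[R]_k) : Prop :=
  forall x y t, C x -> C y -> 0 <= t <= 1 -> C (t *: x + (1 - t) *: y).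

Definition eclosure (k : nat) (C : set 'rV[R]_k) : set 'rV[R]_k :=
  [set x | forall e : R, 0 < e -> exists2 c, C c & sqdist x c < e ^+ 2].

Definition nearly_convex (k : nat) (O : set 'rV[R]_k) : Prop :=
  exists C : set 'rV[R]_k, [/\ convex_set C, C `<=` O & O `<=` eclosure C].

Definition aff (k : nat) (O : set 'rV[R]_k) : set 'rV[R]_k :=
  [set x | exists (m : nat) (p : 'I_m -> 'rV[R]_k) (c : 'I_m -> R),
     [/\ forall i, O (p i), \sum_(i < m) c i = 1 & x = \sum_(i < m) c i *: p i]].

Definition ri (k : nat) (O : set 'rV[R]_k) : set 'rV[R]_k :=
  [set a | O a /\ exists2 d : R, 0 < d & eball a d `&` aff O `<=` O].

Definition epigraph (n : nat) (phi : 'rV[R]_n -> \bar R) : set 'rV[R]_(n + 1) :=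
  [set z | exists x (a : R), z = row_mx x (a%:M) /\ (phi x <= a%:E)%E].

Definition fdom (n : nat) (phi : 'rV[R]_n -> \bar R) : set 'rV[R]_n :=
  [set x | (phi x < +oo)%E].

Definition proper_fun (n : nat) (phi : 'rV[R]_n -> \bar R) : Prop :=
  fdom phi !=set0 /\ forall x, (-oo < phi x)%E.

Definition nearly_convex_fun (n : nat) (phi : 'rV[R]_n -> \bar R) : Prop :=
  nearly_convex (epigraph phi).

Definition sv_dom (n q : nat) (G : 'rV[R]_n -> set 'rV[R]_q) : set 'rV[R]_n :=
  [set x | G x !=set0].

Definition sv_graph (n q : nat) (G : 'rV[R]_n -> set 'rV[R]_q) : set 'rV[R]_(n + q) :=
  [set z | exists x y, z = row_mx x y /\ G x y].

Definition nearly_convex_sv (n q : nat) (G : 'rV[R]_n -> set 'rV[R]_q) : Prop :=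
  nearly_convex (sv_graph G).

Definition sv_image (n q : nat) (G : 'rV[R]_n -> set 'rV[R]_q) (S : set 'rV[R]_n)
  : set 'rV[R]_q := \bigcup_(x in S) G x.

(* primal value V = inf { phi x : x in Theta, 0 in G x }  (inf of empty = +oo) *)
Definition primal_value (n q : nat) (phi : 'rV[R]_n -> \bar R) (Theta : set 'rV[R]_n)
  (G : 'rV[R]_n -> set 'rV[R]_q) : \bar R :=
  ereal_inf [set phi x | x in [set x | Theta x /\ G x 0]].

Definition dual_fun (n q : nat) (phi : 'rV[R]_n -> \bar R) (Theta : set 'rV[R]_n)
  (G : 'rV[R]_n -> set 'rV[R]_q) (ys : 'rV[R]_q) : \bar R :=
  ereal_inf [set e : \bar R | exists x y,
     [/\ Theta x, G x y & e = (phi x - (dotv ys y)%:E)%E]].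

Definition dual_value (n q : nat) (phi : 'rV[R]_n -> \bar R) (Theta : set 'rV[R]_n)
  (G : 'rV[R]_n -> set 'rV[R]_q) : \bar R :=
  ereal_sup (range (dual_fun phi Theta G)).

End Defs.

(* Main.v *)
Require Import Defs.
From mathcomp Require Import all_boot all_order all_algebra.
From mathcomp Require Import boolp classical_sets reals constructive_ereal ereal.
From mathcomp Require Import ring lra.
Import Order.TTheory GRing.Theory Num.Theory.
Local Open Scope classical_set_scope.
Local Open Scope ring_scope.
Set Implicit Arguments. Unset Strict Implicit. Unset Printing Implicit Defensive.

Section P1.
Variable R : realType.
Implicit Types (k : nat).

Lemma dotvDl k (u v w : 'rV[R]_k) : dotv (u + v) w = dotv u w + dotv v w.
Proof. by rewrite /dotv -big_split /=; apply: eq_bigr => i _; rewrite mxE mulrDl. Qed.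
Lemma dotvZl k a (u w : 'rV[R]_k) : dotv (a *: u) w = a * dotv u w.
Proof. by rewrite /dotv mulr_sumr; apply: eq_bigr => i _; rewrite mxE mulrA. Qed.
Lemma dotvC k (u v : 'rV[R]_k) : dotv u v = dotv v u.
Proof. by apply: eq_bigr => i _; rewrite mulrC. Qed.
Lemma dotvDr k (u v w : 'rV[R]_k) : dotv w (u + v) = dotv w u + dotv w v.
Proof. by rewrite dotvC dotvDl !(dotvC w). Qed.
Lemma dotvZr k a (u w : 'rV[R]_k) : dotv w (a *: u) = a * dotv w u.
Proof. by rewrite dotvC dotvZl dotvC. Qed.
Lemma dotv0l k (u : 'rV[R]_k) : dotv 0 u = 0.
Proof. by rewrite /dotv big1 // => i _; rewrite mxE mul0r. Qed.
Lemma dotv0r k (u : 'rV[R]_k) : dotv u 0 = 0.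
Proof. by rewrite dotvC dotv0l. Qed.
Lemma dotvNl k (u v : 'rV[R]_k) : dotv (- u) v = - dotv u v.
Proof. by rewrite -scaleN1r dotvZl mulN1r. Qed.
Lemma dotvNr k (u v : 'rV[R]_k) : dotv v (- u) = - dotv v u.
Proof. by rewrite dotvC dotvNl dotvC. Qed.
Lemma dotvBl k (u v w : 'rV[R]_k) : dotv (u - v) w = dotv u w - dotv v w.
Proof. by rewrite dotvDl dotvNl. Qed.
Lemma dotvBr k (u v w : 'rV[R]_k) : dotv w (u - v) = dotv w u - dotv w v.
Proof. by rewrite dotvDr dotvNr. Qed.
Lemma dotvv_ge0 k (u : 'rV[R]_k) : 0 <= dotv u u.
Proof. by apply: sumr_ge0 => i _; rewrite -expr2 sqr_ge0. Qed.
Lemma sqdist_ge0 k (u v : 'rV[R]_k) : 0 <= sqdist u v.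
Proof. exact: dotvv_ge0. Qed.
Lemma sqdistC k (u v : 'rV[R]_k) : sqdist u v = sqdist v u.
Proof. by rewrite /sqdist -opprB dotvNl dotvNr opprK. Qed.

Lemma coord_le_sqdist k (u v : 'rV[R]_k) i : (u 0 i - v 0 i) ^+ 2 <= sqdist u v.
Proof.
rewrite /sqdist /dotv (bigD1 i) //= !mxE -expr2 lerDl.
by apply: sumr_ge0 => j _; rewrite -expr2 sqr_ge0.
Qed.

Lemma coord_lt k (u v : 'rV[R]_k) e i : 0 < e -> sqdist u v < e ^+ 2 ->
  `|u 0 i - v 0 i| < e.
Proof.
move=> e0 h; have := le_lt_trans (coord_le_sqdist u v i) h.
by rewrite -real_normK ?num_real // ltr_pXn2r // ?nnegrE ?normr_ge0 ?ltW // gtr0_norm.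
Qed.

Lemma sqdist_le_coord k (u v : 'rV[R]_k) r :
  (forall i, `|u 0 i - v 0 i| <= r) -> sqdist u v <= k%:R * r ^+ 2.
Proof.
move=> h; rewrite /sqdist /dotv.
have -> : k%:R * r ^+ 2 = \sum_(i < k) r ^+ 2 by rewrite sumr_const card_ord mulr_natl.
apply: ler_sum => i _; rewrite !mxE -expr2 -real_normK ?num_real //.
by rewrite lerXn2r ?nnegrE ?normr_ge0 ?h // (le_trans _ (h i)).
Qed.

Lemma dotv_row_mx m p (a c : 'rV[R]_m) (b d : 'rV[R]_p) :
  dotv (row_mx a b) (row_mx c d) = dotv a c + dotv b d.
Proof.
rewrite /dotv big_split_ord /=; congr (_ + _); apply: eq_bigr => i _;
by rewrite ?(row_mxEl, row_mxEr).
Qed.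

Lemma sqdist_row_mx m p (a c : 'rV[R]_m) (b d : 'rV[R]_p) :
  sqdist (row_mx a b) (row_mx c d) = sqdist a c + sqdist b d.
Proof. by rewrite /sqdist opp_row_mx add_row_mx dotv_row_mx. Qed.

Lemma sqdist_shift k (x d : 'rV[R]_k) s : sqdist (x + s *: d) x = s ^+ 2 * dotv d d.
Proof. by rewrite /sqdist addrAC subrr add0r dotvZl dotvZr mulrA -expr2. Qed.

Lemma lin_small m p (K : 'M[R]_(m, p)) (u v : 'rV[R]_m) e j : 0 < e ->
  sqdist u v < e ^+ 2 ->
  `|((u - v) *m K) 0 j| <= e * \sum_(i < m) `|K i j|.
Proof.
move=> e0 h; rewrite !mxE mulr_sumr (le_trans (ler_norm_sum _ _ _)) //.
apply: ler_sum => i _; rewrite normrM ler_wpM2r //.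
by rewrite !mxE ltW // coord_lt.
Qed.

End P1.

Section P2.
Variable R : realType.
Implicit Types (k : nat).

Lemma conv_comb k (C : set 'rV[R]_k) : convex_set C ->
  forall N (z : 'I_N -> 'rV[R]_k) (nu : 'I_N -> R),
  (forall i, C (z i)) -> (forall i, 0 <= nu i) -> \sum_i nu i = 1 ->
  C (\sum_i nu i *: z i).
Proof.
move=> cC; elim=> [|N IH] z nu Cz nu0 s1.
  by move: s1; rewrite big_ord0 => /eqP; rewrite eq_sym oner_eq0.
move: s1; rewrite !big_ord_recr /=.
set s := \sum_(i < N) nu (widen_ord (leqnSn N) i) => s1.
have s0 : 0 <= s by apply: sumr_ge0.
have [s_0|sn0] := eqVneq s 0.
  have e0 : forall i : 'I_N, nu (widen_ord (leqnSn N) i) = 0.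
    by move=> i; apply: (psumr_eq0P (P:=predT) (F:= fun j : 'I_N => nu (widen_ord (leqnSn N) j))) => // j _; apply: nu0.
  rewrite big1; last by move=> i _; rewrite e0 scale0r.
  by rewrite add0r; move: s1; rewrite s_0 add0r => ->; rewrite scale1r.
have sp : 0 < s by rewrite lt_def sn0.
set p := \sum_(i < N) (nu (widen_ord (leqnSn N) i) / s) *: z (widen_ord (leqnSn N) i).
have Cp : C p.
  apply: IH => //.
    by move=> i; rewrite divr_ge0.
  by rewrite -mulr_suml divff.
have -> : \sum_(i < N) nu (widen_ord (leqnSn N) i) *: z (widen_ord (leqnSn N) i) = s *: p.
  rewrite /p scaler_sumr; apply: eq_bigr => i _.
  by rewrite scalerA mulrCA divff ?mulr1.
have -> : nu ord_max = 1 - s by rewrite -s1 addrAC subrr add0r.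
apply: cC => //; rewrite s0 /=; rewrite -s1 lerDl; exact: nu0.
Qed.

Lemma aff_mem k (O : set 'rV[R]_k) x : O x -> aff O x.
Proof.
move=> Ox; exists 1%N, (fun _ => x), (fun _ => 1); split => //.
  by rewrite big_ord1.
by rewrite big_ord1 scale1r.
Qed.

Lemma aff3 k (O : set 'rV[R]_k) a b c (al be ga : R) :
  O a -> O b -> O c -> al + be + ga = 1 ->
  aff O (al *: a + be *: b + ga *: c).
Proof.
move=> Oa Ob Oc s1.
exists 3%N, (fun i : 'I_3 => nth 0 [:: a; b; c] i),
  (fun i : 'I_3 => nth 0 [:: al; be; ga] i); split.
- by case=> [[|[|[|]]]] //.
- by rewrite !big_ord_recl big_ord0 /= addr0 addrA.
- by rewrite !big_ord_recl big_ord0 /= addr0 addrA.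
Qed.

End P2.

Section P3.
Variable R : realType.
Implicit Types (k : nat).

Lemma basis_exists m (C : set 'rV[R]_m) c0 : C c0 ->
  exists k (B : 'M[R]_(k, m)), [/\ row_free B, (forall i, C (c0 + row i B)) &
    (forall c, C c -> (c - c0 <= B)%MS)].
Proof.
move=> Cc0.
pose P k := `[< exists B : 'M[R]_(k, m), row_free B /\ forall i, C (c0 + row i B) >].
have P0 : exists i, P i.
  exists 0%N; apply/asboolP; exists 0; split; last by case.
  by rewrite /row_free mxrank0.
have Pub : forall i, P i -> (i <= m)%N.
  move=> i /asboolP [B [fB _]]; move/eqP: fB => <-; exact: rank_leq_col.
case: (ex_maxnP P0 Pub) => k /asboolP [B [fB CB]] kmax.
exists k, B; split => // c Cc.
apply/negPn/negP => nvB.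
set v := c - c0.
have : P (1 + k)%N.
  apply/asboolP; exists (col_mx v B); split.
    rewrite /row_free.
    have h := mxrank_leqif_sup (addsmxSr v B).
    have lt : (\rank B < \rank (v + B)%MS)%N.
      move: h => [hle heq]; rewrite ltn_neqAle hle andbT heq.
      by rewrite addsmx_sub (negbTE nvB).
    move: fB => /eqP rB; rewrite rB in lt.
    have le : (\rank (col_mx v B) <= 1 + k)%N by apply: rank_leq_row.
    rewrite -(addsmxE v B).1 in le *.
    by rewrite eqn_leq le /=.
  move=> i; rewrite -(splitK i); case: (split i) => j /=.
    by rewrite rowKu row_id /v addrC subrK.
  by rewrite rowKd.
by move/kmax; rewrite add1n ltnn.
Qed.

End P3.

Section P4.
Variable R : realType.
Implicit Types (k : nat).

Lemma subB_sub m1 m2 n (A B : 'M[R]_(m1, n)) (C : 'M[R]_(m2, n)) :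
  (A <= C)%MS -> (B <= C)%MS -> (A - B <= C)%MS.
Proof. by move=> hA hB; apply: addmx_sub => //; rewrite -scaleN1r scalemx_sub. Qed.

Lemma small0 (x M : R) : 0 <= M -> (forall e, 0 < e -> `|x| <= e * M) -> x = 0.
Proof.
move=> M0 h; apply/eqP; apply/negPn/negP => x0.
have ax : 0 < `|x| by rewrite normr_gt0.
have M1 : 0 < M + 1 by lra.
have t0 : 0 < 2 * (M + 1) by lra.
have := h (`|x| / (2 * (M + 1))) (divr_gt0 ax t0).
rewrite mulrAC ler_pdivlMr ?mulr_gt0 //.
nra.
Qed.

Lemma entry_bound m p (K : 'M[R]_(m, p)) (u : 'rV[R]_m) r j :
  (forall i, `|u 0 i| <= r) -> `|(u *m K) 0 j| <= r * \sum_(i < m) `|K i j|.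
Proof.
move=> h; rewrite !mxE mulr_sumr (le_trans (ler_norm_sum _ _ _)) //.
apply: ler_sum => i _; rewrite normrM ler_wpM2r //.
Qed.

Lemma rowspace_closed m k (B : 'M[R]_(k, m)) (C : set 'rV[R]_m) c0 :
  (forall c, C c -> (c - c0 <= B)%MS) ->
  forall w, eclosure C w -> (w - c0 <= B)%MS.
Proof.
move=> hC w hw; rewrite submxE; apply/eqP/rowP => j; rewrite [in RHS]mxE.
set K := cokermx B.
apply: (@small0 _ (\sum_(i < m) `|K i j|)); first by apply: sumr_ge0.
move=> e e0; have [c Cc hc] := hw e e0.
have hc0 := hC c Cc; rewrite submxE in hc0; move/eqP: hc0 => hc0.
have -> : (w - c0) *m K = (w - c) *m K.
  have -> : w - c0 = (w - c) + (c - c0) by rewrite addrA subrK.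
  by rewrite mulmxDl hc0 addr0.
exact: lin_small.
Qed.

Lemma aff_rowspace m k (B : 'M[R]_(k, m)) (O : set 'rV[R]_m) c0 :
  (forall c, O c -> (c - c0 <= B)%MS) ->
  forall w, aff O w -> (w - c0 <= B)%MS.
Proof.
move=> hO w [N [p [c [Op s1 ->]]]].
have -> : \sum_(i < N) c i *: p i - c0 = \sum_(i < N) c i *: (p i - c0).
  rewrite -[c0 in LHS]scale1r -s1 scaler_suml -sumrB.
  by apply: eq_bigr => i _; rewrite scalerBr.
by apply: summx_sub => i _; apply: scalemx_sub; apply: hO.
Qed.

Lemma simplex_mem m k (C : set 'rV[R]_m) (B : 'M[R]_(k, m)) c0 :
  convex_set C -> C c0 -> (forall i, C (c0 + row i B)) ->
  forall mu : 'rV[R]_k, (forall i, 0 <= mu 0 i) -> \sum_i mu 0 i <= 1 ->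
  C (c0 + mu *m B).
Proof.
move=> cC Cc0 CB mu mu0 mu1.
pose z (i : 'I_k.+1) := oapp (fun j => c0 + row j B) c0 (unlift ord0 i).
pose nu (i : 'I_k.+1) := oapp (fun j => mu 0 j) (1 - \sum_i mu 0 i) (unlift ord0 i).
have := @conv_comb R m C cC k.+1 z nu.
have -> : \sum_i nu i *: z i = c0 + mu *m B.
  rewrite big_ord_recl /nu /z unlift_none /=.
  have eL : forall i : 'I_k, unlift (@ord0 k) (@lift k.+1 (@ord0 k) i) = Some i by move=> i; exact: liftK.
  rewrite (eq_bigr (fun i => mu 0 i *: (c0 + row i B))); last by move=> i _; rewrite eL.
  rewrite mulmx_sum_row scalerBl scale1r scaler_suml -addrA; congr (_ + _).
  rewrite addrC -sumrB; apply: eq_bigr => i _.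
  by rewrite scalerDr addrAC subrr add0r.
apply.
- by move=> i; rewrite /z; case: (unlift ord0 i) => /=.
- by move=> i; rewrite /nu; case: (unlift ord0 i) => /= [j|]; rewrite ?subr_ge0.
- rewrite big_ord_recl /nu unlift_none /=.
  have eL : forall i : 'I_k, unlift (@ord0 k) (@lift k.+1 (@ord0 k) i) = Some i by move=> i; exact: liftK.
  rewrite [X in _ + X](eq_bigr (fun i => mu 0 i)); last by move=> i _; rewrite eL.
  by rewrite subrK.
Qed.

End P4.

Section P5.
Variable R : realType.
Implicit Types (k : nat).

Lemma single_le_sum n (F : 'I_n -> R) i : (forall j, 0 <= F j) -> F i <= \sum_j F j.
Proof. by move=> h; rewrite (bigD1 i) //= lerDl; apply: sumr_ge0 => j _; exact: h. Qed.

Lemma subE m n (A B : 'M[R]_(m, n)) i j : (A - B) i j = A i j - B i j.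
Proof. by rewrite !mxE. Qed.

Lemma num_mu0 (u x : R) : 0 < u -> u <= 1 -> `|x - u| <= u * u / 2 -> 0 <= x.
Proof. rewrite ler_norml => u0 u1 /andP [h1 h2]; nra. Qed.

Lemma num_mu1 (u kk : R) : 0 < u -> u * (kk + 1) = 1 -> 0 <= kk ->
  kk * (u + u * u / 2) <= 1.
Proof. move=> u0 h k0; nra. Qed.

Lemma num_cvx (l x y : R) : 0 <= l <= 1 -> `|l * x + (1 - l) * y| <= `|x| + `|y|.
Proof.
move=> /andP [l0 l1]; apply: (le_trans (ler_normD _ _)); rewrite !normrM.
rewrite (ger0_norm l0) (@ger0_norm _ (1 - l)); last by lra.
have := normr_ge0 x; have := normr_ge0 y; nra.
Qed.

Lemma hull p m (Ch : set 'rV[R]_p) (P : 'M[R]_(p, m)) (O : set 'rV[R]_m) a :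
  convex_set Ch ->
  (forall z, Ch z -> O (z *m P)) ->
  (forall w, O w -> eclosure [set z *m P | z in Ch] w) ->
  ri O a ->
  exists k (B : 'M[R]_(k, m)), [/\ row_free B,
    (forall w, aff O w -> (w - a <= B)%MS),
    (forall i s, aff O (a + s *: row i B)) &
    exists2 d, 0 < d & exists T, forall w, aff O w -> sqdist w a < d ^+ 2 ->
      exists z, [/\ Ch z, z *m P = w & forall j, `|z 0 j| <= T]].
Proof.
move=> cCh ChO Ocl [Oa [d0 d0p hri]].
set C := [set z *m P | z in Ch].
have cC : convex_set C.
  move=> _ _ t [z1 h1 <-] [z2 h2 <-] t01; exists (t *: z1 + (1 - t) *: z2).
    exact: cCh.
  by rewrite mulmxDl -!scalemxAl.
have OC : forall c, C c -> O c by move=> _ [z hz <-]; apply: ChO.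
have [c0 Cc0 _] := Ocl a Oa 1 ltr01.
have [k [B [fB CB subB]]] := basis_exists Cc0.
have hO : forall w, O w -> (w - c0 <= B)%MS.
  by move=> w Ow; apply: (rowspace_closed subB); apply: Ocl.
have hA : forall w, aff O w -> (w - c0 <= B)%MS by apply: aff_rowspace.
have hac0 := hA a (aff_mem Oa).
exists k, B; split => //.
- move=> w hw.
  have -> : w - a = (w - c0) - (a - c0) by rewrite opprB addrA subrK.
  by apply: subB_sub => //; apply: hA.
- move=> i s.
  have -> : a + s *: row i B = 1 *: a + s *: (c0 + row i B) + (- s) *: c0.
    by apply/rowP => j; rewrite !mxE; ring.
  apply: aff3 => //; first exact: OC (CB i).
    exact: OC Cc0.
  by rewrite addrK.
case: Cc0 => zh0 Chz0 ez0.
have : forall i, exists zh, Ch zh /\ zh *m P = c0 + row i B.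
  by move=> i; case: (CB i) => zh ? ?; exists zh.
case/choice => zhf zhfP.
pose Bh := \matrix_(i < k) (zhf i - zh0).
have BhP : Bh *m P = B.
  apply/row_matrixP => i; rewrite row_mul rowK mulmxBl (zhfP i).2 ez0.
  by rewrite addrC addKr.
have simp : forall mu : 'rV[R]_k, (forall i, 0 <= mu 0 i) -> \sum_i mu 0 i <= 1 ->
    Ch (zh0 + mu *m Bh).
  apply: simplex_mem => // i; rewrite rowK addrC subrK; exact: (zhfP i).1.
have simpP : forall mu : 'rV[R]_k, (zh0 + mu *m Bh) *m P = c0 + mu *m B.
  by move=> mu; rewrite mulmxDl -mulmxA BhP ez0.
pose kap : R := k.+1%:R.
have kap1 : 1 <= kap by rewrite /kap ler1n.
have kapE : kap = k%:R + 1 by rewrite /kap -natr1.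
pose beta : 'rV[R]_k := const_mx kap^-1.
have sbeta : \sum_i beta 0 i = k%:R * kap^-1.
  by rewrite /beta (eq_bigr (fun _ => kap^-1)) ?sumr_const ?card_ord ?mulr_natl // => i _; rewrite mxE.
have ukap : kap^-1 * kap = 1 by rewrite mulVf // gt_eqF // (lt_le_trans ltr01).
have u0 : 0 < kap^-1 by rewrite invr_gt0 (lt_le_trans ltr01).
have hk : k%:R = kap - 1 by rewrite kapE addrK.
have beta_le : \sum_i beta 0 i <= 1.
  by rewrite sbeta hk mulrBl mul1r (mulrC kap) ukap gerBl ltW.
pose g := c0 + beta *m B.
have Og : O g.
  apply: OC; exists (zh0 + beta *m Bh); last exact: simpP.
  by apply: simp => // i; rewrite mxE ltW.
pose s := sqdist a g.
have s0 : 0 <= s := sqdist_ge0 _ _.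
pose eta := d0 / (1 + s).
have s1 : 0 < 1 + s by lra.
have eta0 : 0 < eta by rewrite divr_gt0.
have etaE : eta * (1 + s) = d0 by rewrite /eta mulfVK // gt_eqF.
pose lam := eta / (1 + eta).
have e1 : 0 < 1 + eta by lra.
have lam0 : 0 < lam by rewrite divr_gt0.
have lam1 : lam < 1 by rewrite /lam ltr_pdivrMr //; lra.
pose a2 := a + eta *: (a - g).
have Oa2 : O a2.
  apply: hri; split.
    rewrite /eball /= /a2 sqdist_shift.
    change (eta ^+ 2 * s < d0 ^+ 2); rewrite -etaE; nra.
  have -> : a2 = (1 + eta) *: a + (- eta) *: g + 0 *: g.
    by apply/rowP => j; rewrite !mxE; ring.
  by apply: aff3 => //; ring.
pose tau0 := (kap * kap)^-1.
pose P' := pinvmx B.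
pose Mb := 1 + \sum_j \sum_i `|P' j i|.
have Mb1 : 1 <= Mb.
  by rewrite /Mb lerDl; apply: sumr_ge0 => j _; apply: sumr_ge0 => i _.
have tau0E : tau0 = kap^-1 * kap^-1 by rewrite /tau0 invfM.
pose eps := lam * tau0 / (4 * Mb).
have t0 : 0 < tau0 by rewrite tau0E mulr_gt0.
have M4 : 0 < 4 * Mb by lra.
have eps0 : 0 < eps by rewrite /eps divr_gt0 // mulr_gt0.
have [q Cq hq] := Ocl a2 Oa2 eps eps0.
case: Cq => qh Chq eqh.
have Oq : O q by rewrite -eqh; apply: ChO.
exists eps => //.
exists (\sum_j (`|zh0 0 j| + \sum_i `|Bh i j| + `|qh 0 j|)).
move=> w hw hwa.
pose gw := lam^-1 *: (w - (1 - lam) *: q).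
have lamn0 : lam != 0 by rewrite gt_eqF.
have hgw : (gw - c0 <= B)%MS.
  have -> : gw - c0 = lam^-1 *: ((w - c0) - (1 - lam) *: (q - c0)).
    by apply/rowP => j; rewrite !mxE; field.
  apply: scalemx_sub; apply: subB_sub; first exact: hA.
  by apply: scalemx_sub; apply: hO.
pose mu := (gw - c0) *m P'.
have emu : c0 + mu *m B = gw by rewrite mulmxKpV // addrC subrK.
have ebeta : (g - c0) *m P' = beta.
  have -> : g - c0 = beta *m B by rewrite /g addrC addKr.
  by rewrite mulmxKp.
have hb : forall j, `|(gw - g) 0 j| <= tau0 / (2 * Mb).
  move=> j.
  have -> : (gw - g) 0 j = lam^-1 * ((w 0 j - a 0 j) - (1 - lam) * (q 0 j - a2 0 j)).
    rewrite /gw /a2 /lam !mxE; field.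
    by rewrite !gt_eqF.
  have h1 := coord_lt j eps0 hwa.
  have h2 : `|q 0 j - a2 0 j| < eps by rewrite distrC; apply: coord_lt.
  set X := (w 0 j - a 0 j) - (1 - lam) * (q 0 j - a2 0 j).
  have hX : `|X| <= 2 * eps.
    rewrite /X (le_trans (ler_normB _ _)) // normrM (@ger0_norm _ (1 - lam)); last by lra.
    have := normr_ge0 (q 0 j - a2 0 j); nra.
  rewrite normrM gtr0_norm ?invr_gt0 //.
  have li : 0 < lam^-1 by rewrite invr_gt0.
  apply: le_trans (ler_wpM2l (ltW li) hX) _.
  have -> : lam^-1 * (2 * eps) = tau0 / (2 * Mb).
    by rewrite /eps; field; rewrite lamn0 andbT gt_eqF //; lra.
  by [].
have dev : forall i, `|mu 0 i - beta 0 i| <= tau0 / 2.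
  move=> i.
  have -> : mu 0 i - beta 0 i = ((gw - g) *m P') 0 i.
    have -> : gw - g = (gw - c0) - (g - c0) by rewrite opprB addrA subrK.
    by rewrite mulmxBl ebeta subE.
  apply: le_trans (entry_bound P' i hb) _.
  have hS : \sum_j `|P' j i| <= Mb.
    have hS' : \sum_j `|P' j i| <= \sum_j \sum_i `|P' j i|.
      apply: ler_sum => j _.
      by apply: (single_le_sum (F := fun i => `|P' j i|)).
    rewrite /Mb; lra.
  have -> : tau0 / 2 = tau0 / (2 * Mb) * Mb.
    by field; rewrite gt_eqF //; lra.
  by rewrite ler_wpM2l // divr_ge0 ?ltW //; lra.
have ku1 : kap^-1 <= 1 by rewrite invf_le1 // (lt_le_trans ltr01).
have ukap2 : kap^-1 * (k%:R + 1) = 1 by rewrite -kapE.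
have dev' : forall i, `|mu 0 i - kap^-1| <= kap^-1 * kap^-1 / 2.
  have bE : forall i, beta 0 i = kap^-1 by move=> i0; rewrite mxE.
  by move=> i; rewrite -tau0E -(bE i); apply: dev.
have mu0 : forall i, 0 <= mu 0 i by move=> i; apply: (num_mu0 u0 ku1 (dev' i)).
have mu1 : \sum_i mu 0 i <= 1.
  apply: le_trans (_ : \sum_(i < k) (kap^-1 + kap^-1 * kap^-1 / 2) <= 1).
    apply: ler_sum => i _; have := dev' i; rewrite ler_norml => /andP [_ h].
    by move: h; rewrite lerBlDl.
  rewrite sumr_const card_ord -[_ *+ k]mulr_natl.
  by apply: num_mu1 => //; rewrite ler0n.
have mu1' : forall i, mu 0 i <= 1.
  by move=> i; apply: le_trans mu1; apply: (single_le_sum (F := fun i => mu 0 i)).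
pose sh := zh0 + mu *m Bh.
have Chs : Ch sh := simp mu mu0 mu1.
have sP : sh *m P = gw by rewrite simpP emu.
have l01 : 0 <= lam <= 1 by apply/andP; split; lra.
exists (lam *: sh + (1 - lam) *: qh); split.
- exact: cCh.
- by rewrite mulmxDl -!scalemxAl sP eqh /gw; apply/rowP => j; rewrite !mxE; field.
- move=> j.
  have hsj : `|sh 0 j| <= `|zh0 0 j| + \sum_i `|Bh i j|.
    rewrite /sh mxE (le_trans (ler_normD _ _)) // lerD2l mxE.
    rewrite (le_trans (ler_norm_sum _ _ _)) //; apply: ler_sum => i _.
    by rewrite normrM ger0_norm // ler_piMl.
  have -> : (lam *: sh + (1 - lam) *: qh) 0 j = lam * sh 0 j + (1 - lam) * qh 0 j.
    by rewrite !mxE.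
  apply: (le_trans (num_cvx _ _ l01)).
  apply: le_trans (_ : `|zh0 0 j| + \sum_i `|Bh i j| + `|qh 0 j| <= _).
    by rewrite lerD2r.
  apply: (single_le_sum (F := fun j => `|zh0 0 j| + \sum_i `|Bh i j| + `|qh 0 j|)).
  by move=> j'; rewrite !addr_ge0 // sumr_ge0.
Qed.

End P5.

Section P6.
Variable R : realType.
Implicit Types (k : nat).

Lemma num_seg (lam d S ka : R) : 0 < lam -> lam <= 1 -> 0 < d -> 0 <= S ->
  ka * lam = 1 - lam -> 0 <= ka -> S < (lam * d) ^+ 2 -> ka ^+ 2 * S < d ^+ 2.
Proof.
move=> l0 l1 d0 S0 hk k0 hS.
have h1 : ka ^+ 2 * S <= ka ^+ 2 * (lam * d) ^+ 2 by rewrite ler_wpM2l ?sqr_ge0 ?ltW.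
apply: le_lt_trans h1 _.
rewrite exprMn mulrA -exprMn hk; nra.
Qed.

Lemma seg p m (Ch : set 'rV[R]_p) (P : 'M[R]_(p, m)) (O : set 'rV[R]_m) x0 :
  convex_set Ch ->
  (forall z, Ch z -> O (z *m P)) ->
  (forall w, O w -> eclosure [set z *m P | z in Ch] w) ->
  ri O x0 ->
  exists T, forall lam, 0 < lam -> lam <= 1 -> exists2 eps, 0 < eps &
    forall x zc, O x -> Ch zc -> sqdist x (zc *m P) < eps ^+ 2 ->
    exists zh, [/\ Ch zh, (forall j, `|zh 0 j| <= T),
       Ch (lam *: zh + (1 - lam) *: zc) &
       (lam *: zh + (1 - lam) *: zc) *m P = lam *: x0 + (1 - lam) *: x].
Proof.
move=> cCh ChO Ocl rx0.
have Ox0 := rx0.1.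
have [k [B [_ _ _ [d d0 [T hT]]]]] := hull cCh ChO Ocl rx0.
exists T => lam l0 l1; exists (lam * d); first exact: mulr_gt0.
move=> x zc Ox Chz hx.
pose ka := (1 - lam) / lam.
have kaE : ka * lam = 1 - lam by rewrite /ka mulfVK // gt_eqF.
have ka0 : 0 <= ka by apply: divr_ge0; [lra | exact: ltW].
pose w := x0 + ka *: (x - zc *m P).
have hw : aff O w.
  have -> : w = 1 *: x0 + ka *: x + (- ka) *: (zc *m P).
    by apply/rowP => j; rewrite !mxE; ring.
  by apply: aff3 => //; [exact: ChO | ring].
have hwd : sqdist w x0 < d ^+ 2.
  rewrite /w sqdist_shift; apply: (num_seg l0 l1 d0 _ kaE ka0) => //.
  exact: dotvv_ge0.
have [zh [Chzh ezh bzh]] := hT w hw hwd.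
exists zh; split => //.
  by apply: cCh => //; apply/andP; split; lra.
rewrite mulmxDl -!scalemxAl ezh /w /ka; apply/rowP => j; rewrite !mxE; field.
by rewrite gt_eqF.
Qed.

Lemma num_hb (s1 s2 F1 F2 l : R) : 0 < s1 -> s2 < 0 -> l = - s2 / (s1 - s2) ->
  0 <= l * F1 + (1 - l) * F2 -> F2 / s2 <= F1 / s1.
Proof.
move=> s10 s20 -> h.
have D : 0 < s1 - s2 by lra.
have h2 : 0 <= - s2 * F1 + s1 * F2.
  have -> : - s2 * F1 + s1 * F2 = ((- s2 / (s1 - s2)) * F1 + (1 - (- s2 / (s1 - s2))) * F2) * (s1 - s2).
    by field; rewrite gt_eqF.
  by rewrite mulr_ge0 // ltW.
rewrite ler_ndivrMr // mulrAC ler_pdivrMr //; nra.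
Qed.


Lemma dotv_delta k (c v : 'rV[R]_k) g (J : 'I_k) :
  dotv (c + g *: delta_mx 0 J) v = dotv c v + g * v 0 J.
Proof.
rewrite dotvDl dotvZl; congr (_ + _ * _).
rewrite /dotv (bigD1 J) //= big1 ?addr0; first by rewrite mxE !eqxx mul1r.
by move=> i /negbTE iJ; rewrite mxE iJ andbF mul0r.
Qed.

Lemma hb k (W : 'rV[R]_k -> R -> Prop) (a : R) :
  (forall v1 t1 v2 t2 l, W v1 t1 -> W v2 t2 -> 0 <= l <= 1 ->
     W (l *: v1 + (1 - l) *: v2) (l * t1 + (1 - l) * t2)) ->
  (forall t, W 0 t -> a <= t) ->
  (forall j : 'I_k, exists s t, 0 < s /\ W (s *: delta_mx 0 j) t) ->
  (forall j : 'I_k, exists s t, 0 < s /\ W (- s *: delta_mx 0 j) t) ->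
  exists c : 'rV[R]_k, forall v t, W v t -> a + dotv c v <= t.
Proof.
move=> cvx base nbp nbn.
suff: forall j : nat, (j <= k)%N -> exists c, forall v t, W v t ->
    (forall i : 'I_k, (j <= i)%N -> v 0 i = 0) -> a + dotv c v <= t.
  move=> /(_ k (leqnn k)) [c hc]; exists c => v t Wv; apply: hc => // i.
  by rewrite leqNgt ltn_ord.
elim=> [_|j IH jk].
  exists 0 => v t Wv h0.
  have v0 : v = 0 by apply/rowP => i; rewrite (h0 i) // mxE.
  by rewrite dotv0l addr0; apply: base; rewrite -v0.
have jk' : (j < k)%N := jk.
pose J := Ordinal jk'.
have [c hc] := IH (ltnW jk).
pose F v t := t - a - dotv c v.
pose Z (v : 'rV[R]_k) := forall i : 'I_k, (j < i)%N -> v 0 i = 0.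
pose A := [set r | exists v t, [/\ W v t, Z v, v 0 J < 0 & r = F v t / v 0 J]].
have key : forall v1 t1 v2 t2, W v1 t1 -> Z v1 -> 0 < v1 0 J ->
    W v2 t2 -> Z v2 -> v2 0 J < 0 -> F v2 t2 / v2 0 J <= F v1 t1 / v1 0 J.
  move=> v1 t1 v2 t2 W1 Z1 p1 W2 Z2 n2.
  have D : 0 < v1 0 J - v2 0 J by lra.
  pose l := - v2 0 J / (v1 0 J - v2 0 J).
  have l01 : 0 <= l <= 1.
    apply/andP; split; first by rewrite divr_ge0 ?ltW //; lra.
    by rewrite ler_pdivrMr //; lra.
  have Wc := cvx _ _ _ _ l W1 W2 l01.
  have zc : forall i : 'I_k, (j <= i)%N -> (l *: v1 + (1 - l) *: v2) 0 i = 0.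
    move=> i; rewrite leq_eqVlt => /orP [/eqP ei | lt].
      have -> : i = J by apply: val_inj.
      by rewrite !mxE /l; field; rewrite gt_eqF.
    by rewrite !mxE Z1 // Z2 // !mulr0 addr0.
  have := hc _ _ Wc zc.
  move=> h; apply: (num_hb p1 n2 (erefl l)).
  have -> : l * F v1 t1 + (1 - l) * F v2 t2 =
     (l * t1 + (1 - l) * t2) - (a + dotv c (l *: v1 + (1 - l) *: v2)).
    by rewrite dotvDr !dotvZr /F; ring.
  by rewrite subr_ge0.
have [s [t [s0 Wp]]] := nbp J.
have [s' [t' [s0' Wn]]] := nbn J.
have ZJ : forall r : R, Z (r *: delta_mx 0 J).
  move=> r i ji; rewrite !mxE.
  have -> : (i == J) = false by apply/negbTE; apply/eqP => eiJ; move: ji; rewrite eiJ ltnn.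
  by rewrite andbF mulr0.
have eJ : forall r : R, (r *: delta_mx (0 : 'I_1) J) 0 J = r.
  by move=> r; rewrite !mxE !eqxx mulr1.
have hs : has_sup A.
  split.
    exists (F (- s' *: delta_mx 0 J) t' / (- s')), (- s' *: delta_mx 0 J), t'.
    by split => //; rewrite eJ // oppr_lt0.
  exists (F (s *: delta_mx 0 J) t / s) => r [v2 [t2 [W2 Z2 n2 ->]]].
  have p1 : 0 < (s *: delta_mx (0 : 'I_1) J) 0 J by rewrite eJ.
  by have := key _ _ _ _ Wp (ZJ s) p1 W2 Z2 n2; rewrite eJ.
exists (c + sup A *: delta_mx 0 J) => v t0 Wv Zv.
rewrite dotv_delta.
have Zv' : Z v by move=> i ji; apply: Zv.
case: (ltrgtP (v 0 J) 0) => hv.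
- have : F v t0 / v 0 J <= sup A.
    by apply: sup_upper_bound => //; exists v, t0; split.
  rewrite ler_ndivrMr // /F => h; lra.
- have : sup A <= F v t0 / v 0 J.
    apply: ge_sup; first exact: hs.1.
    by move=> r [v2 [t2 [W2 Z2 n2 ->]]]; apply: key.
  rewrite ler_pdivlMr // /F => h; lra.
- rewrite hv mulr0 addr0; apply: hc => // i; rewrite leq_eqVlt => /orP [/eqP ei | lt].
    by have -> : i = J by apply: val_inj.
  exact: Zv.
Qed.

End P6.

Section P7.
Variable R : realType.
Implicit Types (k : nat).

Definition prj (a b : nat) : 'M[R]_(a + b, a) := col_mx 1%:M 0.

Lemma prj_row a b (x : 'rV[R]_a) (u : 'rV[R]_b) : row_mx x u *m prj a b = x.
Proof. by rewrite /prj mul_row_col mulmx1 mulmx0 addr0. Qed.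

Lemma prj_lsub a b (z : 'rV[R]_(a + b)) : z *m prj a b = lsubmx z.
Proof. by rewrite -{1}(hsubmxK z) prj_row. Qed.

Lemma eclosure_proj a b (C : set 'rV[R]_(a + b)) w u :
  eclosure C (row_mx w u) -> eclosure [set z *m prj a b | z in C] w.
Proof.
move=> h e e0; have [c Cc hc] := h e e0.
exists (c *m prj a b); first by exists c.
rewrite prj_lsub; move: hc; rewrite -{1}(hsubmxK c) sqdist_row_mx => hc.
apply: le_lt_trans hc; rewrite lerDl; exact: sqdist_ge0.
Qed.

Lemma mx1_comb (l u t1 t2 : R) :
  (l *: (t1%:M : 'M[R]_1) + u *: t2%:M) = (l * t1 + u * t2)%:M.
Proof. by apply/matrixP => i j; rewrite !mxE !ord1 eqxx !mulr1n. Qed.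

Lemma sqdist_mx1 (t s : R) : sqdist (t%:M : 'rV[R]_1) s%:M = (t - s) ^+ 2.
Proof. by rewrite /sqdist /dotv big_ord1 !mxE eqxx !mulr1n expr2. Qed.

Lemma le_eps (x y M : R) : 0 <= M -> (forall e, 0 < e -> x <= y + e * M) -> x <= y.
Proof.
move=> M0 h; rewrite leNgt; apply/negP => yx.
have M1 : 0 < 2 * (M + 1) by lra.
have d : 0 < x - y by lra.
pose ka := M / (2 * (M + 1)).
have ka1 : ka < 1 by rewrite /ka ltr_pdivrMr //; lra.
have := h ((x - y) / (2 * (M + 1))) (divr_gt0 d M1).
have -> : (x - y) / (2 * (M + 1)) * M = (x - y) * ka.
  by rewrite /ka mulrAC mulrA.
by nra.
Qed.

Lemma dotv_mulmx k p (c : 'rV[R]_p) (u : 'rV[R]_k) (M : 'M[R]_(k, p)) :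
  dotv c (u *m M) = dotv (c *m M^T) u.
Proof.
rewrite /dotv; under eq_bigr do rewrite mxE mulr_sumr.
rewrite exchange_big /=; apply: eq_bigr => j _; rewrite mxE mulr_suml.
by apply: eq_bigr => i _; rewrite mxE; ring.
Qed.

Lemma mix_bound N (l : R) (Y zh zc : 'rV[R]_N) T d :
  0 <= l <= 1 -> (forall j, `|zh 0 j| <= T) -> 0 < d -> sqdist Y zc < d ^+ 2 ->
  sqdist Y (l *: zh + (1 - l) *: zc) <= N%:R * (l * (\sum_j `|Y 0 j| + T) + d) ^+ 2.
Proof.
move=> /andP [l0 l1] hT d0 hY; apply: sqdist_le_coord => j.
rewrite !mxE.
have hj := coord_lt j d0 hY.
have yj : `|Y 0 j| <= \sum_j `|Y 0 j| by apply: (single_le_sum (F := fun j => `|Y 0 j|)).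
have -> : Y 0 j - (l * zh 0 j + (1 - l) * zc 0 j) =
  l * (Y 0 j - zh 0 j) + (1 - l) * (Y 0 j - zc 0 j) by ring.
apply: (le_trans (ler_normD _ _)); rewrite !normrM (ger0_norm l0) (@ger0_norm _ (1 - l)); last by lra.
have := ler_normB (Y 0 j) (zh 0 j); have := hT j; have := normr_ge0 (Y 0 j - zc 0 j).
nra.
Qed.

End P7.

Section Main.
Variables (R : realType) (n q : nat) (phi : 'rV[R]_n -> \bar R)
  (Theta : set 'rV[R]_n) (G : 'rV[R]_n -> set 'rV[R]_q).
Variables (C1 : set 'rV[R]_(n + 1)) (C2 : set 'rV[R]_n) (C3 : set 'rV[R]_(n + q)).
Hypothesis pfin : forall x, (-oo < phi x)%E.
Hypothesis cC1 : convex_set C1.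
Hypothesis C1E : C1 `<=` epigraph phi.
Hypothesis EC1 : epigraph phi `<=` eclosure C1.
Hypothesis cC2 : convex_set C2.
Hypothesis C2T : C2 `<=` Theta.
Hypothesis TC2 : Theta `<=` eclosure C2.
Hypothesis cC3 : convex_set C3.
Hypothesis C3G : C3 `<=` sv_graph G.
Hypothesis GC3 : sv_graph G `<=` eclosure C3.

Definition S0 : set 'rV[R]_(q + 1) := [set z | exists x y (t t' : R),
  [/\ z = row_mx y t%:M, C2 x, C3 (row_mx x y), C1 (row_mx x t'%:M) & t' <= t]].

Lemma mx1_inj (t s : R) : (t%:M : 'M[R]_1) = s%:M -> t = s.
Proof. by move/matrixP => /(_ 0 0); rewrite !mxE eqxx !mulr1n. Qed.

Lemma S0_convex : convex_set S0.
Proof.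
move=> _ _ l [x1 [y1 [t1 [u1 [-> h21 h31 h11 le1]]]]] [x2 [y2 [t2 [u2 [-> h22 h32 h12 le2]]]]] l01.
have /andP [l0 l1] := l01.
exists (l *: x1 + (1 - l) *: x2), (l *: y1 + (1 - l) *: y2), (l * t1 + (1 - l) * t2),
  (l * u1 + (1 - l) * u2); split.
- by rewrite !scale_row_mx add_row_mx mx1_comb.
- exact: cC2.
- by rewrite -add_row_mx -!scale_row_mx; apply: cC3.
- by rewrite -mx1_comb -add_row_mx -!scale_row_mx; apply: cC1.
- rewrite lerD // ler_wpM2l //; lra.
Qed.

Lemma S0_feas y t : S0 (row_mx y t%:M) ->
  exists x, [/\ Theta x, G x y, (phi x <= t%:E)%E & C2 x].
Proof.
move=> [x [y' [t0 [t' [e hC2 hC3 hC1 le]]]]].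
have [ey et] := eq_row_mx e; rewrite -ey in hC3; have et' := mx1_inj et; subst t0.
exists x; split => //.
- exact: C2T.
- have [x1 [y1 [e1 g1]]] := C3G hC3; have [-> ->] := eq_row_mx e1; exact: g1.
- have [x1 [a1 [e1 p1]]] := C1E hC1; have [ex ea] := eq_row_mx e1.
  rewrite ex (le_trans p1) // -(mx1_inj ea) lee_fin //.
Qed.

Lemma sqdist_split a b (x : 'rV[R]_a) (u : 'rV[R]_b) c :
  sqdist (row_mx x u) c = sqdist x (lsubmx c) + sqdist u (rsubmx c).
Proof. by rewrite -{1}(hsubmxK c) sqdist_row_mx. Qed.

Lemma sqdist_lsub a b (x : 'rV[R]_a) (u : 'rV[R]_b) c :
  sqdist x (lsubmx c) <= sqdist (row_mx x u) c.
Proof. by rewrite sqdist_split lerDl sqdist_ge0. Qed.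

Lemma sqdist_rsub a b (x : 'rV[R]_a) (u : 'rV[R]_b) c :
  sqdist u (rsubmx c) <= sqdist (row_mx x u) c.
Proof. by rewrite sqdist_split lerDr sqdist_ge0. Qed.

Lemma ChO2 : forall z, C2 z -> Theta (z *m 1%:M).
Proof. by move=> z hz; rewrite mulmx1; apply: C2T. Qed.

Lemma Ocl2 : forall w, Theta w -> eclosure [set z *m (1%:M : 'M[R]_n) | z in C2] w.
Proof.
move=> w Tw e e0; have [c Cc hc] := (TC2 Tw) e e0.
by exists c => //; exists c => //; rewrite mulmx1.
Qed.

Lemma ChO1 : forall z, C1 z -> fdom phi (z *m prj R n 1).
Proof.
move=> z /C1E [x [a [-> pa]]]; rewrite prj_row /fdom /=.
exact: le_lt_trans pa (ltry a).
Qed.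

Lemma Ocl1 : forall w, fdom phi w -> eclosure [set z *m prj R n 1 | z in C1] w.
Proof.
move=> w; rewrite /fdom /=; have := pfin w.
case E: (phi w) => [r| |] // _ _.
apply: (@eclosure_proj R n 1 C1 w r%:M); apply: EC1.
by exists w, r; split => //; rewrite E.
Qed.

Lemma ChO3 : forall z, C3 z -> sv_dom G (z *m prj R n q).
Proof. by move=> z /C3G [x [y [-> g]]]; rewrite prj_row; exists y. Qed.

Lemma Ocl3 : forall w, sv_dom G w -> eclosure [set z *m prj R n q | z in C3] w.
Proof.
move=> w [y gy]; apply: (@eclosure_proj R n q C3 w y); apply: GC3.
by exists w, y.
Qed.

Variable x0 : 'rV[R]_n.
Hypothesis r1 : ri (fdom phi) x0.
Hypothesis r2 : ri Theta x0.
Hypothesis r3 : ri (sv_dom G) x0.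

Lemma sq_le (u v : R) : 0 <= u -> u <= v -> u ^+ 2 <= v ^+ 2.
Proof. by move=> u0 uv; rewrite !expr2; apply: ler_pM. Qed.

Lemma num_fin (e N rho A B : R) : 0 < e -> 1 <= N -> rho = e / N ->
  A + B <= (N - 1) * rho ^+ 2 -> A + B < e ^+ 2.
Proof.
move=> e0 N1 -> h; apply: (le_lt_trans h).
have N0 : 0 < N by lra.
have -> : (N - 1) * (e / N) ^+ 2 = e ^+ 2 * ((N - 1) / (N * N)).
  by field; rewrite gt_eqF.
rewrite -[X in _ < X]mulr1 ltr_pM2l ?exprn_gt0 // ltr_pdivrMr ?mulr_gt0 //.
nra.
Qed.

Lemma U1 x y t : Theta x -> G x y -> (phi x <= t%:E)%E -> eclosure S0 (row_mx y t%:M).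
Proof.
move=> Tx Gxy pxt e e0.
have [T2 hS2] := seg cC2 ChO2 Ocl2 r2.
have [T1 hS1] := seg cC1 ChO1 Ocl1 r1.
have [T3 hS3] := seg cC3 ChO3 Ocl3 r3.
pose Y1 : 'rV[R]_(n + 1) := row_mx x t%:M.
pose Y3 : 'rV[R]_(n + q) := row_mx x y.
pose M := \sum_j `|Y3 0 j| + `|T3| + \sum_j `|Y1 0 j| + `|T1|.
have sY3 : 0 <= \sum_j `|Y3 0 j| by apply: sumr_ge0.
have sY1 : 0 <= \sum_j `|Y1 0 j| by apply: sumr_ge0.
have aT3 := normr_ge0 T3; have aT1 := normr_ge0 T1.
have M0 : 0 <= M by rewrite /M; lra.
pose N : R := (n + q + (n + 1))%:R + 1.
have N1 : 1 <= N by rewrite /N lerDr ler0n.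
pose rho := e / N.
have rho0 : 0 < rho by rewrite divr_gt0 //; lra.
pose lam := rho / (2 * (M + 1) + rho).
have D0 : 0 < 2 * (M + 1) + rho by lra.
have lam0 : 0 < lam by rewrite divr_gt0.
have lam1 : lam <= 1 by rewrite ler_pdivrMr //; lra.
have lamM : lam * M <= rho / 2.
  rewrite /lam mulrAC ler_pdivrMr //; nra.
have l01 : 0 <= lam <= 1 by apply/andP; split => //; apply: ltW.
have [eps1 e1p H1] := hS1 lam lam0 lam1.
have [eps2 e2p H2] := hS2 lam lam0 lam1.
have [eps3 e3p H3] := hS3 lam lam0 lam1.
pose eps := Num.min (rho / 2) (Num.min eps1 (Num.min eps2 eps3)).
have eps0 : 0 < eps by rewrite /eps !lt_min e1p e2p e3p divr_gt0.
have epsr : eps <= rho / 2 by rewrite /eps ge_min lexx.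
have eps_1 : eps <= eps1 by rewrite /eps !ge_min lexx orbT.
have eps_2 : eps <= eps2 by rewrite /eps !ge_min lexx !orbT.
have eps_3 : eps <= eps3 by rewrite /eps !ge_min lexx !orbT.
have sq : forall u v : R, 0 < u -> u <= v -> u ^+ 2 <= v ^+ 2 by move=> u v u0 uv; nra.
have [c2 Cc2 hc2] := (TC2 Tx) eps eps0.
have [c1 Cc1 hc1] : exists2 c, C1 c & sqdist Y1 c < eps ^+ 2.
  by apply: EC1 => //; exists x, t.
have [c3 Cc3 hc3] : exists2 c, C3 c & sqdist Y3 c < eps ^+ 2.
  by apply: GC3 => //; exists x, y.
have fx : fdom phi x by rewrite /fdom /=; apply: le_lt_trans pxt (ltry t).
have [zh2 [_ _ Cz2 ez2]] : exists zh, [/\ C2 zh, (forall j, `|zh 0 j| <= T2),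
    C2 (lam *: zh + (1 - lam) *: c2) &
    (lam *: zh + (1 - lam) *: c2) *m 1%:M = lam *: x0 + (1 - lam) *: x].
  apply: H2 => //; rewrite mulmx1; apply: (lt_le_trans hc2); exact: sq.
have [zh1 [_ b1 Cz1 ez1]] : exists zh, [/\ C1 zh, (forall j, `|zh 0 j| <= T1),
    C1 (lam *: zh + (1 - lam) *: c1) &
    (lam *: zh + (1 - lam) *: c1) *m prj R n 1 = lam *: x0 + (1 - lam) *: x].
  apply: H1 => //; rewrite prj_lsub; apply: (le_lt_trans (sqdist_lsub _ (t%:M) _)).
  by apply: (lt_le_trans hc1); exact: sq.
have [zh3 [_ b3 Cz3 ez3]] : exists zh, [/\ C3 zh, (forall j, `|zh 0 j| <= T3),
    C3 (lam *: zh + (1 - lam) *: c3) &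
    (lam *: zh + (1 - lam) *: c3) *m prj R n q = lam *: x0 + (1 - lam) *: x].
  apply: H3 => //; first by exists y.
  rewrite prj_lsub; apply: (le_lt_trans (sqdist_lsub _ y _)).
  by apply: (lt_le_trans hc3); exact: sq.
set Z1 := lam *: zh1 + (1 - lam) *: c1 in Cz1 ez1.
set Z3 := lam *: zh3 + (1 - lam) *: c3 in Cz3 ez3.
set xl := lam *: x0 + (1 - lam) *: x in ez1 ez2 ez3.
rewrite mulmx1 in ez2.
rewrite prj_lsub in ez1 ez3.
exists (row_mx (rsubmx Z3) ((rsubmx Z1) 0 0)%:M).
  exists xl, (rsubmx Z3), ((rsubmx Z1) 0 0), ((rsubmx Z1) 0 0); split => //.
  - by rewrite -ez2.
  - by rewrite -ez3 prj_lsub hsubmxK.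
  - by rewrite -mx11_scalar -ez1 hsubmxK.
rewrite sqdist_row_mx -mx11_scalar.
have h3 : sqdist y (rsubmx Z3) <= sqdist Y3 Z3 by apply: sqdist_rsub.
have h1 : sqdist t%:M (rsubmx Z1) <= sqdist Y1 Z1 by apply: sqdist_rsub.
have b3' : forall j, `|zh3 0 j| <= `|T3| by move=> j; apply: (le_trans (b3 j)); apply: ler_norm.
have b1' : forall j, `|zh1 0 j| <= `|T1| by move=> j; apply: (le_trans (b1 j)); apply: ler_norm.
have m3 := mix_bound l01 b3' eps0 hc3.
have m1 := mix_bound l01 b1' eps0 hc1.
have rr3 : lam * (\sum_j `|Y3 0 j| + `|T3|) + eps <= rho.
  have : lam * (\sum_j `|Y3 0 j| + `|T3|) <= lam * M.
    by apply: ler_wpM2l; [exact: ltW | rewrite /M; lra].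
  lra.
have rr1 : lam * (\sum_j `|Y1 0 j| + `|T1|) + eps <= rho.
  have : lam * (\sum_j `|Y1 0 j| + `|T1|) <= lam * M.
    by apply: ler_wpM2l; [exact: ltW | rewrite /M; lra].
  lra.
have p3 : 0 <= lam * (\sum_j `|Y3 0 j| + `|T3|) by apply: mulr_ge0; [exact: ltW | lra].
have p1 : 0 <= lam * (\sum_j `|Y1 0 j| + `|T1|) by apply: mulr_ge0; [exact: ltW | lra].
apply: (num_fin e0 N1 (erefl _)).
have -> : N - 1 = (n + q)%:R + (n + 1)%:R by rewrite /N addrK natrD.
have nq0 : 0 <= (n + q)%:R :> R by rewrite ler0n.
have n10 : 0 <= (n + 1)%:R :> R by rewrite ler0n.
set a3 := lam * (\sum_j `|Y3 0 j| + `|T3|) + eps in rr3 m3.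
set a1 := lam * (\sum_j `|Y1 0 j| + `|T1|) + eps in rr1 m1.
have a30 : 0 <= a3 by rewrite /a3; lra.
have a10 : 0 <= a1 by rewrite /a1; lra.
have f3 : sqdist Y3 Z3 <= (n + q)%:R * rho ^+ 2.
  by apply: (le_trans m3); apply: ler_wpM2l => //; apply: sq_le.
have f1 : sqdist Y1 Z1 <= (n + 1)%:R * rho ^+ 2.
  by apply: (le_trans m1); apply: ler_wpM2l => //; apply: sq_le.
rewrite mulrDl; apply: lerD; [exact: le_trans h3 f3 | exact: le_trans h1 f1].
Qed.

Lemma dotv_close k (w u v : 'rV[R]_k) e : 0 < e -> sqdist u v < e ^+ 2 ->
  `|dotv w u - dotv w v| <= e * \sum_i `|w 0 i|.
Proof.
move=> e0 h; rewrite -dotvBr /dotv mulr_sumr (le_trans (ler_norm_sum _ _ _)) //.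
apply: ler_sum => i _; rewrite normrM mulrC ler_wpM2r // !mxE ltW //.
exact: coord_lt.
Qed.

Lemma S0_form z : S0 z -> exists y (t : R), z = row_mx y t%:M.
Proof. by move=> [x [y [t [t' [-> _ _ _ _]]]]]; exists y, t. Qed.

Hypothesis r0 : ri (sv_image G (Theta `&` fdom phi)) 0.

Lemma num_eta (d v : R) : 0 < d -> 0 <= v -> (d / (1 + v)) ^+ 2 * v < d ^+ 2.
Proof.
move=> d0 v0; set s := d / (1 + v).
have s0 : 0 < s by rewrite divr_gt0 //; lra.
have sE : s * (1 + v) = d by rewrite /s mulfVK // gt_eqF //; lra.
rewrite -sE; nra.
Qed.

Lemma strong (a : R) : (a%:E <= primal_value phi Theta G)%E ->
  (a%:E <= dual_value phi Theta G)%E.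
Proof.
move=> ha.
pose D := sv_image G (Theta `&` fdom phi).
have ChO : forall z, S0 z -> D (z *m prj R q 1).
  move=> z Sz; have [y [t ez]] := S0_form Sz; rewrite ez prj_row.
  rewrite ez in Sz; have [x [Tx Gx px _]] := S0_feas Sz.
  exists x => //; split => //; rewrite /fdom /=; exact: le_lt_trans px (ltry t).
have Ocl : forall w, D w -> eclosure [set z *m prj R q 1 | z in S0] w.
  move=> w [x [Tx fx] Gw]; move: fx; rewrite /fdom /=; have := pfin x.
  case E: (phi x) => [r| |] // _ _.
  apply: (@eclosure_proj R q 1 S0 w r%:M); apply: (U1 Tx Gw).
  by rewrite E.
have [k [B [fB hsub hrow [d d0 [T hT]]]]] := hull S0_convex ChO Ocl r0.
pose W (mu : 'rV[R]_k) (t : R) := S0 (row_mx (mu *m B) t%:M).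
have nb : forall (j : 'I_k) (sg : R), sg ^+ 2 = 1 -> exists s t, 0 < s /\ W ((sg * s) *: delta_mx 0 j) t.
  move=> j sg sg1.
  pose s := d / (1 + dotv (row j B) (row j B)).
  have s0 : 0 < s by rewrite divr_gt0 // ltr_wpDr // dotvv_ge0.
  have ha1 := hrow j (sg * s).
  have hd : sqdist (0 + (sg * s) *: row j B) 0 < d ^+ 2.
    rewrite sqdist_shift exprMn sg1 mul1r; apply: num_eta => //; exact: dotvv_ge0.
  have [z [Sz ez _]] := hT _ ha1 hd.
  have [y [t ez2]] := S0_form Sz.
  exists s, t; split => //; rewrite /W.
  have <- : y = ((sg * s) *: delta_mx 0 j) *m B.
    by rewrite -scalemxAl -rowE -(add0r (_ *: row j B)) -ez ez2 prj_row.
  by rewrite -ez2.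
have [c hc] : exists c : 'rV[R]_k, forall v t, W v t -> a + dotv c v <= t.
  apply: hb.
  - move=> v1 t1 v2 t2 l W1 W2 l01; rewrite /W.
    have -> : row_mx ((l *: v1 + (1 - l) *: v2) *m B) (l * t1 + (1 - l) * t2)%:M =
      l *: row_mx (v1 *m B) t1%:M + (1 - l) *: row_mx (v2 *m B) t2%:M.
      by rewrite !scale_row_mx add_row_mx mx1_comb mulmxDl -!scalemxAl.
    exact: S0_convex.
  - move=> t; rewrite /W mul0mx => W0.
    have [x [Tx Gx px _]] := S0_feas W0.
    have : (primal_value phi Theta G <= phi x)%E.
      by apply: ereal_inf_lbound; exists x.
    move=> hp; have := le_trans ha (le_trans hp px); rewrite lee_fin //.
  - move=> j; have [s [t [s0 hs]]] := nb j 1 (expr1n _ _); exists s, t; split => //.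
    by rewrite mul1r in hs.
  - move=> j; have m1 : (-1 : R) ^+ 2 = 1 by rewrite sqrrN expr1n.
    have [s [t [s0 hs]]] := nb j (-1) m1; exists s, t; split => //.
    by rewrite mulN1r in hs.
pose ys := c *m (pinvmx B)^T.
have key : forall y t, S0 (row_mx y t%:M) -> a + dotv ys y <= t.
  move=> y t Sy.
  have Dy : D y by have := ChO _ Sy; rewrite prj_row.
  have hy := hsub y (aff_mem Dy); rewrite subr0 in hy.
  have ey : (y *m pinvmx B) *m B = y := mulmxKpV hy.
  have := hc (y *m pinvmx B) t; rewrite /W ey => h.
  by have := h Sy; rewrite dotv_mulmx.
apply: (@le_trans _ _ (dual_fun phi Theta G ys)); last first.
  by apply: ereal_sup_ubound; exists ys.
apply/ereal_infP => _ [x [y [Tx Gxy ->]]].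
have := pfin x.
case E: (phi x) => [r| |] // _; last by rewrite leey.
rewrite -EFinB lee_fin.
have ecl : eclosure S0 (row_mx y r%:M) by apply: (U1 Tx Gxy); rewrite E.
have Mp : 0 <= 1 + \sum_i `|ys 0 i| by rewrite addr_ge0 // sumr_ge0.
apply: (le_eps Mp) => e e0.
have [z Sz hz] := ecl e e0.
have [y' [t' ez]] := S0_form Sz; rewrite ez in Sz hz.
have kz := key _ _ Sz.
rewrite sqdist_row_mx in hz.
have hy : sqdist y y' < e ^+ 2.
  by apply: le_lt_trans hz; rewrite lerDl sqdist_ge0.
have ht : sqdist (r%:M : 'rV[R]_1) t'%:M < e ^+ 2.
  by apply: le_lt_trans hz; rewrite lerDr sqdist_ge0.
have ht' := coord_lt 0 e0 ht; rewrite !mxE eqxx !mulr1n in ht'.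
have hd := dotv_close ys e0 hy.
move: ht' hd; rewrite !ler_norml !ltr_norml => /andP [h1 h2] /andP [h3 h4].
have : e * (1 + \sum_i `|ys 0 i|) = e + e * \sum_i `|ys 0 i| by ring.
lra.
Qed.

End Main.

Lemma weak (R : realType) (n q : nat) (phi : 'rV[R]_n -> \bar R)
  (Theta : set 'rV[R]_n) (G : 'rV[R]_n -> set 'rV[R]_q) :
  (dual_value phi Theta G <= primal_value phi Theta G)%E.
Proof.
apply: ge_ereal_sup => _ [ys _ <-].
apply/ereal_infP => _ [x [Tx Gx0] <-].
apply: ereal_inf_lbound; exists x, 0; split => //.
by rewrite dotv0r sube0.
Qed.

Unset Implicit Arguments.

Theorem theorem7p3 (R : realType) (n q : nat) (phi : 'rV[R]_n -> \bar R)
  (Theta : set 'rV[R]_n) (G : 'rV[R]_n -> set 'rV[R]_q) :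
  proper_fun phi -> nearly_convex_fun phi ->
  nearly_convex Theta -> nearly_convex_sv G ->
  ri (fdom phi) `&` ri (sv_dom G) `&` ri Theta !=set0 ->
  ri (sv_image G (Theta `&` fdom phi)) 0 ->
  primal_value phi Theta G = dual_value phi Theta G.
Proof.
move=> [_ pfin] [C1 [cC1 C1E EC1]] [C2 [cC2 C2T TC2]] [C3 [cC3 C3G GC3]]
  [x0 [[r1 r3] r2]] r0.
have st := strong pfin cC1 C1E EC1 cC2 C2T TC2 cC3 C3G GC3 r1 r2 r3 r0.
apply/eqP; rewrite eq_le weak andbT.
case E: (primal_value phi Theta G) => [r| |].
- by apply: st; rewrite E.
- have hall : forall a : R, (a%:E <= dual_value phi Theta G)%E.
    by move=> a; apply: st; rewrite E leey.
  case F: (dual_value phi Theta G) => [r| |] //.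
    have h := hall (r + 1)%R.
    rewrite F lee_fin in h.
    by move: h; rewrite gerDl ler10.
  by have := hall 0; rewrite F.
- by rewrite leNye.
Qed.
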